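(* Let $\|\cdot\|_W$ be the wedge norm on $\mathbb{R}^p$, with allowed sets $S=\{1,\dots,s\}$, $s\in\{1,\dots,p-1\}$, and associated norms $\Omega^{S^c}$ as in the context. Fix $J\subset\{1,\dots,p\}$ and let $g$ be the gauge norm described in the context. Then $g(\beta)=\|\beta\|_1$ for all $\beta\in\mathbb{R}^p$.
   Context: Let $\mathcal{A}:=\{a\in\mathbb{R}^p: a_j>0 \ \forall j,\ a_1\ge a_2\ge\dots\ge a_p\}$ and $\|\beta\|_W:=\inf_{a\in\mathcal{A}}\frac12\sum_{j=1}^p\big(\beta_j^2/a_j+a_j\big)$. For $S=\{1,\dots,s\}$ let $\mathcal{A}_{S^c}:=\{(a_j)_{j\in S^c}:a\in\mathcal{A}\}$ and $\Omega^{S^c}(\beta_{S^c}):=\inf_{a\in\mathcal{A}_{S^c}}\frac12\sum_{j\in S^c}\big(\beta_j^2/a_j+a_j\big)$; then $\|\beta_S\|_W+\Omega^{S^c}(\beta_{S^c})\le\|\beta\|_W$ for all $\beta$, and $\Upsilon_S(\beta):=\|\beta_S\|_W+\Omega^{S^c}(\beta_{S^c})$. Here $\beta_S$ has entries $\beta_j1\{j\in S\}$. Let $\beta_{f(J)}:=\beta_J-\beta_{J^{c}}$, $\mathrm{flip}_J(B):=\{\beta_{f(J)}:\beta\in B\}$, $\overline{B}:=\bigcup_{S\text{ allowed}}\{\beta:\Upsilon_S(\beta)\le1\}$, $B_g:=\mathrm{Conv}(\overline{B}\cup\mathrm{flip}_J(\overline{B}))$, and $g(x):=\inf\{t>0:x\in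 tB_g\}$. *)

(* Defs.v *)
From HB Require Import structures.
From mathcomp Require Import all_boot all_order all_algebra.
From mathcomp Require Import all_classical all_reals.
Set Implicit Arguments. Unset Strict Implicit. Unset Printing Implicit Defensive.
Import Order.TTheory GRing.Theory Num.Theory.
Local Open Scope classical_set_scope.
Local Open Scope ring_scope.

Section Wedge.
Variables (R : realType) (p : nat).

(* Vectors in R^p are row vectors 'rV[R]_p; coordinate j (0-based) is b 0 j. *)

Definition wedge_cone (a : 'I_p -> R) : Prop :=
  (forall j, 0 < a j) /\ (forall i j : 'I_p, (i <= j)%N -> a j <= a i).

Definition wedge_norm (b : 'rV[R]_p) : R :=
  inf [set (2^-1 * \sum_(j < p) (b 0 j ^+ 2 / a j + a j)) | a in wedge_cone].

(* S = {1,...,s}, i.e. 0-based indices j < s *)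
Definition restrS (s : nat) (b : 'rV[R]_p) : 'rV[R]_p :=
  \row_j (if (j < s)%N then b 0 j else 0).

(* Omega^{S^c}(b_{S^c}) = inf over a in A_{S^c} (restrictions of a in A to S^c) *)
Definition OmegaSc (s : nat) (b : 'rV[R]_p) : R :=
  inf [set (2^-1 * \sum_(j < p | (s <= j)%N) (b 0 j ^+ 2 / a j + a j)) | a in wedge_cone].

(* Upsilon_S(b) = ||b_S||_W + Omega^{S^c}(b_{S^c}); OmegaSc only reads
   the coordinates j >= s, i.e. b_{S^c}. *)
Definition UpsS (s : nat) (b : 'rV[R]_p) : R :=
  wedge_norm (restrS s b) + OmegaSc s b.

(* allowed S = {1..s}, s in {1,...,p-1} *)
Definition Bbar : set 'rV[R]_p :=
  [set b | exists s : nat, [/\ (0 < s)%N, (s < p)%N & UpsS s b <= 1]].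

Definition flipJ (J : {set 'I_p}) (b : 'rV[R]_p) : 'rV[R]_p :=
  \row_j (if j \in J then b 0 j else - b 0 j).

Definition conv_hull (A : set 'rV[R]_p) : set 'rV[R]_p :=
  [set x | exists (n : nat) (w : 'I_n -> R) (y : 'I_n -> 'rV[R]_p),
     [/\ (forall i, 0 <= w i), \sum_(i < n) w i = 1, (forall i, A (y i))
       & x = \sum_(i < n) w i *: y i]].

Definition Bg (J : {set 'I_p}) : set 'rV[R]_p :=
  conv_hull (Bbar `|` (flipJ J @` Bbar)).

Definition gauge_g (J : {set 'I_p}) (x : 'rV[R]_p) : R :=
  inf [set t : R | 0 < t /\ exists2 b, Bg J b & x = t *: b].

End Wedge.

(* Main.v *)
Require Import Defs.
From HB Require Import structures.
From mathcomp Require Import all_boot all_order all_algebra.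
From mathcomp Require Import all_classical all_reals.
From mathcomp Require Import ring lra.
Import Order.TTheory GRing.Theory Num.Theory.
Local Open Scope ring_scope.

Section Proofs.
Variables (R : realType) (p : nat).

Definition L1 (b : 'rV[R]_p) := \sum_(j < p) `|b 0 j|.

Lemma amgm (c a : R) : 0 < a -> 2 * `|c| <= c ^+ 2 / a + a.
Proof.
move=> a0; have an : a != 0 by rewrite gt_eqF.
rewrite -real_normK ?num_real //.
have -> : `|c| ^+ 2 / a + a = 2 * `|c| + (`|c| - a) ^+ 2 / a by field.
by rewrite lerDl divr_ge0 // ?sqr_ge0 ?ltW.
Qed.

Lemma sum_sub (P : pred 'I_p) (h : 'I_p -> R) :
  (forall i, 0 <= h i) -> \sum_(i | P i) h i <= \sum_i h i.
Proof. by move=> h0; rewrite [X in _ <= X](bigID P) /= lerDl sumr_ge0. Qed.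

Lemma cone1 : wedge_cone (fun _ : 'I_p => 1 : R).
Proof. by split. Qed.

Lemma inf_lb_gen (P : pred 'I_p) (b : 'rV[R]_p) :
  \sum_(j | P j) `|b 0 j| <=
  inf [set (2^-1 * \sum_(j | P j) (b 0 j ^+ 2 / a j + a j)) | a in @wedge_cone R p].
Proof.
apply: lb_le_inf; first by eexists; exists (fun _ => 1); first exact: cone1.
move=> _ [a [a0 _] <-].
have : \sum_(j | P j) (2 * `|b 0 j|) <= \sum_(j | P j) (b 0 j ^+ 2 / a j + a j).
  by apply: ler_sum => i _; apply: amgm.
rewrite -mulr_sumr; lra.
Qed.

Lemma inf_ub_gen (P : pred 'I_p) (b : 'rV[R]_p) a : wedge_cone a ->
  inf [set (2^-1 * \sum_(j | P j) (b 0 j ^+ 2 / a j + a j)) | a in @wedge_cone R p]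
  <= 2^-1 * \sum_(j | P j) (b 0 j ^+ 2 / a j + a j).
Proof.
move=> ca; apply: ge_inf; last by exists a.
exists 0 => _ [a' [a'0 _] <-]; apply: mulr_ge0; first by rewrite invr_ge0.
apply: sumr_ge0 => i _; apply: addr_ge0; last exact: ltW.
by apply: divr_ge0; [apply: sqr_ge0 | apply: ltW].
Qed.

Lemma wedge_lb (b : 'rV[R]_p) : L1 b <= wedge_norm b.
Proof. exact: (inf_lb_gen xpredT b). Qed.

Lemma wedge_ub (b : 'rV[R]_p) a : wedge_cone a ->
  wedge_norm b <= 2^-1 * \sum_(j < p) (b 0 j ^+ 2 / a j + a j).
Proof. exact: (inf_ub_gen xpredT b). Qed.

Lemma omega_lb s (b : 'rV[R]_p) : \sum_(j < p | (s <= j)%N) `|b 0 j| <= OmegaSc s b.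
Proof. exact: (inf_lb_gen (fun j : 'I_p => (s <= j)%N) b). Qed.

Lemma omega_ub s (b : 'rV[R]_p) a : wedge_cone a ->
  OmegaSc s b <= 2^-1 * \sum_(j < p | (s <= j)%N) (b 0 j ^+ 2 / a j + a j).
Proof. exact: (inf_ub_gen (fun j : 'I_p => (s <= j)%N) b). Qed.

Lemma sum_bound (P : pred 'I_p) (b : 'rV[R]_p) (a : 'I_p -> R) (j0 : 'I_p) (c eps : R) :
  (forall i, 0 < a i) -> 0 <= eps -> 0 <= c ->
  (P j0 -> b 0 j0 ^+ 2 / a j0 + a j0 <= c) ->
  (forall i, P i -> i != j0 -> b 0 i = 0 /\ a i <= eps) ->
  \sum_(i | P i) (b 0 i ^+ 2 / a i + a i) <= c + p%:R * eps.
Proof.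
move=> a0 e0 c0 Hj Ho.
pose h (i : 'I_p) := if i == j0 then c else eps.
have h0 i : 0 <= h i by rewrite /h; case: (i == j0).
apply: (@le_trans _ _ (\sum_(i | P i) h i)).
  apply: ler_sum => i Pi; rewrite /h; case: (eqVneq i j0) => [eij|ne]; first by move: Pi; rewrite eij => /Hj.
  by have [-> ?] := Ho i Pi ne; rewrite expr2 !mul0r add0r.
apply: (le_trans (@sum_sub P h h0)).
rewrite (bigD1 j0) //= /h eqxx lerD2l.
rewrite (eq_bigr (fun _ => eps)); last by move=> i /negbTE ->.
apply: (le_trans (@sum_sub _ (fun _ => eps) (fun _ => e0))).
by rewrite sumr_const card_ord mulr_natl.
Qed.


Lemma unit_Bbar (hp : (1 < p)%N) (b : 'rV[R]_p) (j : 'I_p) :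
  b 0 j ^+ 2 = 1 -> (forall i, i != j -> b 0 i = 0) -> Bbar b.
Proof.
move=> bj bo.
have ppos : 0 < p%:R + 1 :> R by apply: ltr_wpDl; rewrite ?ler0n.
have key : forall s, (0 < s)%N -> (s < p)%N ->
    (forall eps : R, 0 < eps -> eps <= 1 -> UpsS s b <= 1 + (p%:R + 1) * eps) ->
    Bbar b.
  move=> s s0 sp H; exists s; split => //.
  apply/ler_addgt0Pr => e e0.
  pose eps := Num.min 1 (e / (p%:R + 1)).
  have eps0 : 0 < eps by rewrite lt_min ltr01 divr_gt0.
  have eps1 : eps <= 1 by rewrite ge_min lexx.
  have epse : (p%:R + 1) * eps <= e.
    have : eps <= e / (p%:R + 1) by rewrite ge_min lexx orbT.
    by rewrite ler_pdivlMr // mulrC.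
  by apply: le_trans (H eps eps0 eps1) _; rewrite lerD2l.
case: (posnP j) => [j0 | jpos].
- apply: (key 1%N) => // eps e0 e1.
  pose a (i : 'I_p) := if (i <= 0)%N then 1 else eps.
  have ca : wedge_cone a.
    split => [i|i k ik]; rewrite /a.
      by case: ifP.
    case: (leqP k 0) => hk; first by rewrite (leq_trans ik hk).
    by case: ifP.
  have apos : forall i, 0 < a i by case: ca.
  rewrite /UpsS.
  have W := wedge_ub (restrS 1 b) a ca.
  have W2 : \sum_(i < p) ((restrS 1 b) 0 i ^+ 2 / a i + a i) <= 2 + p%:R * eps.
    apply: (@sum_bound xpredT _ _ j) => //; first exact: ltW.
      by rewrite /restrS mxE j0 /= bj /a j0 /= divr1; lra.
    move=> i _ ne; rewrite /restrS mxE; split.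
      by case: ifP => _ //; apply: bo.
    rewrite /a leqn0; have -> : (val i == 0%N) = false.
      by apply/negbTE; move: ne; apply: contra => /eqP h; apply/eqP/val_inj; rewrite /= h j0.
    by [].
  have O := omega_ub 1 b a ca.
  have O2 : \sum_(i < p | (1 <= i)%N) (b 0 i ^+ 2 / a i + a i) <= 0 + p%:R * eps.
    apply: (@sum_bound _ _ _ j) => //; first exact: ltW.
      by rewrite j0.
    move=> i hi ne; split; first exact: bo.
    by rewrite /a leqNgt hi.
  rewrite mulrDl mul1r.
  have pe : 0 <= p%:R * eps by apply: mulr_ge0; rewrite ?ler0n ?ltW.
  lra.
- apply: (key j) => // eps e0 e1.
  pose a (i : 'I_p) := if (i <= j)%N then 1 else eps.
  have ca : wedge_cone a.
    split => [i|i k ik]; rewrite /a.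
      by case: ifP.
    case: (leqP k j) => hk; first by rewrite (leq_trans ik hk).
    by case: ifP.
  have apos : forall i, 0 < a i by case: ca.
  pose a' (i : 'I_p) := eps.
  have ca' : wedge_cone a' by split.
  rewrite /UpsS.
  have W := wedge_ub (restrS j b) a' ca'.
  have W2 : \sum_(i < p) ((restrS j b) 0 i ^+ 2 / a' i + a' i) <= eps + p%:R * eps.
    apply: (@sum_bound xpredT _ _ j) => //; try exact: ltW.
      by rewrite /restrS mxE ltnn expr2 !mul0r add0r.
    by move=> i _ ne; rewrite /restrS mxE; split => //; case: ifP => _ //; apply: bo.
  have O := omega_ub j b a ca.
  have O2 : \sum_(i < p | (j <= i)%N) (b 0 i ^+ 2 / a i + a i) <= 2 + p%:R * eps.
    apply: (@sum_bound _ _ _ j) => //; first exact: ltW.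
      by rewrite /a leqnn bj divr1; lra.
    move=> i hi ne; split; first exact: bo.
    rewrite /a; have -> : (i <= j)%N = false => //.
    apply/negbTE; rewrite -ltnNge ltn_neqAle hi andbT.
    by move: ne; apply: contra => /eqP h; apply/eqP/val_inj.
  rewrite mulrDl mul1r.
  have pe : 0 <= p%:R * eps by apply: mulr_ge0; rewrite ?ler0n ?ltW.
  lra.
Qed.


Lemma Bbar_L1 (y : 'rV[R]_p) : Bbar y -> L1 y <= 1.
Proof.
move=> [s [_ _ hs]]; apply: le_trans hs.
rewrite /L1 /UpsS (bigID (fun k : 'I_p => (k < s)%N)) /=.
apply: lerD.
  apply: le_trans (wedge_lb _).
  rewrite /L1 big_mkcond /=; apply: ler_sum => i _.
  by rewrite /restrS mxE; case: ifP => _ //; rewrite normr0.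
apply: le_trans (omega_lb s y).
by rewrite le_eqVlt; apply/orP; left; apply/eqP; apply: eq_bigl => i; rewrite -leqNgt.
Qed.

Lemma flip_L1 J (y : 'rV[R]_p) : L1 (flipJ J y) = L1 y.
Proof. by apply: eq_bigr => i _; rewrite /flipJ mxE; case: ifP => _; rewrite ?normrN. Qed.

Lemma Bg_L1 J (x : 'rV[R]_p) : Bg J x -> L1 x <= 1.
Proof.
move=> [n [w [y [w0 w1 hy ->]]]].
have hy1 i : L1 (y i) <= 1.
  case: (hy i) => [/Bbar_L1 //|[z /Bbar_L1 hz <-]]; by rewrite flip_L1.
apply: (@le_trans _ _ (\sum_(i < n) w i * L1 (y i))).
  rewrite /L1 (eq_bigr (fun k => `|\sum_(i < n) w i * y i 0 k|)); last first.
    by move=> k _; rewrite summxE; congr `|_|; apply: eq_bigr => i _; rewrite mxE.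
  apply: (@le_trans _ _ (\sum_(k < p) \sum_(i < n) w i * `|y i 0 k|)).
    apply: ler_sum => k _; apply: le_trans (ler_norm_sum _ _ _) _.
    by apply: ler_sum => i _; rewrite normrM ger0_norm.
  by rewrite exchange_big /=; apply: ler_sum => i _; rewrite mulr_sumr.
rewrite -w1; apply: ler_sum => i _.
by rewrite -[X in _ <= X]mulr1; apply: ler_wpM2l.
Qed.


Lemma in_T (hp : (1 < p)%N) J (x : 'rV[R]_p) (t : R) :
  L1 x < t -> exists2 y, Bg J y & x = t *: y.
Proof.
move=> ht.
have L0 : 0 <= L1 x by apply: sumr_ge0 => i _; exact: normr_ge0.
have t0 : 0 < t by apply: le_lt_trans ht.
have tn : t != 0 by rewrite gt_eqF.
have pn : (p%:R : R) != 0 by rewrite pnatr_eq0 -lt0n (ltn_trans _ hp).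
have p0 : (0 : R) <= p%:R by rewrite ler0n.
pose r := 1 - L1 x / t.
have r0 : 0 <= r by rewrite subr_ge0 ler_pdivrMr // mul1r ltW.
pose d (j : 'I_p) : 'rV[R]_p := delta_mx 0 j.
pose w (i : 'I_(p + p)) : R := match fintype.split i with
  | inl j => (`|x 0 j| + x 0 j) / (2 * t) + r / (2 * p%:R)
  | inr j => (`|x 0 j| - x 0 j) / (2 * t) + r / (2 * p%:R) end.
pose y (i : 'I_(p + p)) : 'rV[R]_p := match fintype.split i with
  | inl j => d j | inr j => - d j end.
have sl (j : 'I_p) : fintype.split (lshift p j) = inl j := @unsplitK p p (inl j).
have sr (j : 'I_p) : fintype.split (rshift p j) = inr j := @unsplitK p p (inr j).
have Bd : forall j, Bbar (d j) /\ Bbar (- d j).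
  move=> j; split; apply: (@unit_Bbar hp _ j).
  - by rewrite mxE !eqxx /= expr1n.
  - by move=> i ne; rewrite mxE eqxx (negbTE ne).
  - by rewrite !mxE !eqxx /= sqrrN expr1n.
  - by move=> i ne; rewrite !mxE eqxx (negbTE ne) oppr0.
exists (t^-1 *: x); last by rewrite scalerA mulfV // scale1r.
exists (p + p)%N, w, y; split.
- move=> i; rewrite /w; case: (fintype.split i) => j;
  have h1 := ler_norm (x 0 j); have h2 := ler_norm (- x 0 j); rewrite normrN in h2;
  apply: addr_ge0; apply: divr_ge0; lra.
- rewrite big_split_ord /= -big_split /=.
  rewrite (eq_bigr (fun j => `|x 0 j| / t + r / p%:R)); last first.
    by move=> j _; rewrite /w sl sr; field; rewrite pn tn.
  rewrite big_split /= -mulr_suml sumr_const card_ord.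
  rewrite -(mulr_natr (r / p%:R) p) -mulrA mulVf // mulr1 /r /L1; ring.
- by move=> i; left; rewrite /y; case: (fintype.split i) => j; case: (Bd j).
- rewrite big_split_ord /= -big_split /=.
  rewrite {1}(row_sum_delta x) scaler_sumr; apply: eq_bigr => j _.
  rewrite /w /y !sl !sr scalerN -scalerBl scalerA; congr (_ *: _); field.
  by rewrite tn pn.
Qed.

End Proofs.

Theorem lemma6 (R : realType) (p : nat) (hp : (1 < p)%N) (J : {set 'I_p})
  (b : 'rV[R]_p) :
  gauge_g J b = \sum_(j < p) `|b 0 j|.
Proof.
rewrite /gauge_g; change (\sum_(j < p) `|b 0 j|) with (L1 R p b).
have L0 : 0 <= L1 R p b by apply: sumr_ge0 => i _; exact: normr_ge0.
apply/eqP; rewrite eq_le; apply/andP; split.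
- apply/ler_addgt0Pr => e e0; apply: ge_inf.
    by exists 0 => t [t0 _]; exact: ltW.
  split; first lra.
  by apply: in_T => //; rewrite ltrDl.
- apply: lb_le_inf.
    exists (L1 R p b + 1); split; first lra.
    by apply: in_T => //; rewrite ltrDl.
  move=> t [t0 [y hy ->]].
  rewrite /L1 (eq_bigr (fun k => t * `|y 0 k|)); last first.
    by move=> k _; rewrite mxE normrM gtr0_norm.
  rewrite -mulr_sumr -[X in _ <= X]mulr1; apply: (ler_wpM2l (ltW t0)).
  exact: (@Bg_L1 R p J y hy).
Qed.
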